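(* For every positive integer $d$, every graph $G$ that is isomorphic to the intersection graph of a finite collection of closed balls in $\mathbb{R}^d$ has minimum degree at most $(2\tau(G)+1)\cdot 3^d$. In particular, the class of intersection graphs of balls in $\mathbb{R}^d$ is degree-bounded with degree-bounding function $f_d(\tau)=(2\tau+1)3^d$.
   Context: The intersection graph of a finite collection $\mathcal{B}$ of sets has vertex set $\mathcal{B}$, two distinct members being adjacent if they intersect. A closed ball in $\mathbb{R}^d$ is a set $\{x:\|x-p\|_2\le r\}$ with $r>0$. The biclique number $\tau(G)$ is the largest $t$ such that $G$ has a (not necessarily induced) subgraph isomorphic to $K_{t,t}$. A class $\mathcal{F}$ is degree-bounded with degree-bounding function $f$ if $\delta(G)\le f(\tau(G))$ for all $G\in\mathcal{F}$, where $\delta$ is minimum degree. *)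

(* Defs.v *)
From HB Require Import structures.
From mathcomp Require Import all_boot all_order all_algebra.
From mathcomp Require Import reals.
Set Implicit Arguments. Unset Strict Implicit. Unset Printing Implicit Defensive.
Import Order.TTheory GRing.Theory Num.Theory.

Local Open Scope ring_scope.

Definition euclid_norm (R : realType) (d : nat) (x : 'I_d -> R) : R :=
  Num.sqrt (\sum_(i < d) x i ^+ 2).

Definition closed_ball (R : realType) (d : nat) (p : 'I_d -> R) (r : R)
  (x : 'I_d -> R) : Prop :=
  euclid_norm (fun i => x i - p i) <= r.

Local Close Scope ring_scope.

Definition simple_graph (V : finType) (e : rel V) : Prop :=
  symmetric e /\ irreflexive e.

Definition has_biclique (V : finType) (e : rel V) (t : nat) : bool :=
  [exists A : {set V}, exists B : {set V},
     [&& [disjoint A & B], #|A| == t, #|B| == t &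
         [forall a in A, forall b in B, e a b]]].

Definition biclique_number (V : finType) (e : rel V) : nat :=
  \max_(t < #|V|.+1 | has_biclique e t) t.

Definition degree (V : finType) (e : rel V) (v : V) : nat :=
  #|[set w | e v w]|.

(* Main.v *)
Require Import Defs.
From HB Require Import structures.
From mathcomp Require Import all_boot all_order all_algebra.
From mathcomp Require Import reals.
From mathcomp Require Import ring lra zify.
Set Implicit Arguments. Unset Strict Implicit. Unset Printing Implicit Defensive.
Import Order.TTheory GRing.Theory Num.Theory.

Local Open Scope ring_scope.

Section Real.
Variable R : realType.
Variable d : nat.
Implicit Types (x y a b : 'I_d -> R).

Definition sqv x : R := \sum_(i < d) x i ^+ 2.

Lemma sqv_ge0 x : 0 <= sqv x.
Proof. by apply: sumr_ge0 => i _; rewrite sqr_ge0. Qed.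

Lemma nrmE x : euclid_norm x = Num.sqrt (sqv x).
Proof. by []. Qed.

Lemma nrm_ge0 x : 0 <= euclid_norm x.
Proof. exact: sqrtr_ge0. Qed.

Lemma nrm_sqr x : euclid_norm x ^+ 2 = sqv x.
Proof. by rewrite nrmE sqr_sqrtr // sqv_ge0. Qed.

Lemma le_sqr_nn (u v : R) : 0 <= u -> 0 <= v -> (u <= v) = (u ^+ 2 <= v ^+ 2).
Proof. by move=> hu hv; rewrite ler_pXn2r // nnegrE. Qed.

Lemma nrm_le x r : 0 <= r -> (euclid_norm x <= r) = (sqv x <= r ^+ 2).
Proof. by move=> hr; rewrite le_sqr_nn ?nrm_ge0 // nrm_sqr. Qed.

Lemma sqv0 x : sqv x = 0 -> forall i, x i = 0.
Proof.
move=> h i; apply/eqP; rewrite -sqrf_eq0; apply/eqP.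
have := h; rewrite /sqv (bigD1 i) //= => /eqP; rewrite paddr_eq0 ?sqr_ge0 //.
  by case/andP=> /eqP.
by apply: sumr_ge0 => j _; rewrite sqr_ge0.
Qed.

Lemma CS a b : \sum_(i < d) a i * b i <= euclid_norm a * euclid_norm b.
Proof.
set s := euclid_norm a; set t := euclid_norm b; set C := \sum_(i < d) a i * b i.
have hs : 0 <= s by exact: nrm_ge0.
have ht : 0 <= t by exact: nrm_ge0.
have key : \sum_(i < d) (a i * t - b i * s) ^+ 2 = 2 * (s * t) * (s * t - C).
  transitivity (\sum_(i < d) (t ^+ 2 * a i ^+ 2 + s ^+ 2 * b i ^+ 2 - 2 * s * t * (a i * b i))).
    by apply: eq_bigr => i _; ring.
  rewrite sumrB big_split /= -!mulr_sumr -/C.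
  have -> : \sum_(i < d) a i ^+ 2 = s ^+ 2 by rewrite /s nrm_sqr.
  have -> : \sum_(i < d) b i ^+ 2 = t ^+ 2 by rewrite /t nrm_sqr.
  ring.
have h0 : 0 <= 2 * (s * t) * (s * t - C).
  by rewrite -key; apply: sumr_ge0 => i _; rewrite sqr_ge0.
have [st0|stp] := eqVneq (s * t) 0.
  move: st0 => /eqP; rewrite mulf_eq0 => /orP [] /eqP h.
  - have ha : forall i, a i = 0.
      apply: sqv0; by rewrite -nrm_sqr -/s h expr0n.
    rewrite h mul0r /C big1 // => i _; by rewrite ha mul0r.
  - have hb : forall i, b i = 0.
      apply: sqv0; by rewrite -nrm_sqr -/t h expr0n.
    rewrite h mulr0 /C big1 // => i _; by rewrite hb mulr0.
have stp' : 0 < s * t by rewrite lt_def stp mulr_ge0.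
rewrite -subr_ge0; move: h0; rewrite pmulr_rge0 //; lra.
Qed.

Lemma minkowski a b : euclid_norm (fun i => a i + b i) <= euclid_norm a + euclid_norm b.
Proof.
rewrite nrm_le ?addr_ge0 ?nrm_ge0 //.
have -> : sqv (fun i => a i + b i) = sqv a + sqv b + 2 * \sum_(i < d) a i * b i.
  rewrite /sqv mulr_sumr -!big_split /=; apply: eq_bigr => i _; ring.
have := CS a b; rewrite -!nrm_sqr; nra.
Qed.

Lemma nrm_ext x y : (forall i, x i = y i) -> euclid_norm x = euclid_norm y.
Proof. by move=> h; rewrite !nrmE /sqv; congr Num.sqrt; apply: eq_bigr => i _; rewrite h. Qed.

Lemma sqv_ext x y : (forall i, x i = y i) -> sqv x = sqv y.
Proof. by move=> h; rewrite /sqv; apply: eq_bigr => i _; rewrite h. Qed.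

Lemma nrm_tri x y (z : 'I_d -> R) :
  euclid_norm (fun i => x i - z i) <= euclid_norm (fun i => x i - y i) + euclid_norm (fun i => y i - z i).
Proof.
have := minkowski (fun i => x i - y i) (fun i => y i - z i).
by rewrite (@nrm_ext (fun i => x i - z i) (fun i => (x i - y i) + (y i - z i))) // => i; ring.
Qed.

Lemma nrm_sym x y : euclid_norm (fun i => x i - y i) = euclid_norm (fun i => y i - x i).
Proof. by rewrite !nrmE /sqv; congr Num.sqrt; apply: eq_bigr => i _; ring. Qed.

Lemma sqv_scale (t : R) x : sqv (fun i => t * x i) = t ^+ 2 * sqv x.
Proof. by rewrite /sqv mulr_sumr; apply: eq_bigr => i _; ring. Qed.

Lemma nrm_scale (t : R) x : euclid_norm (fun i => t * x i) = `|t| * euclid_norm x.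
Proof. by rewrite !nrmE sqv_scale sqrtrM ?sqr_ge0 // sqrtr_sqr. Qed.

Lemma sq_le_sqv x i : x i ^+ 2 <= sqv x.
Proof.
rewrite /sqv (bigD1 i) //= lerDl; apply: sumr_ge0 => j _; exact: sqr_ge0.
Qed.

End Real.

Section Shrink.
Variable R : realType.
Variable d : nat.

Definition shr_t (p c : 'I_d -> R) (r : R) : R :=
  let D := euclid_norm (fun i => c i - p i) in
  if D <= 2 * r then 0 else (D - 2 * r) / D.

Definition shr (p c : 'I_d -> R) (r : R) : 'I_d -> R :=
  fun i => c i + shr_t p c r * (p i - c i).

Lemma shr_near (p c : 'I_d -> R) (r : R) : 0 < r ->
  euclid_norm (fun i => shr p c r i - p i) <= 2 * r.
Proof.
move=> hr.
set D := euclid_norm (fun i => c i - p i).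
rewrite (@nrm_ext _ _ _ (fun i => (1 - shr_t p c r) * (c i - p i))); last first.
  by move=> i; rewrite /shr /=; ring.
rewrite nrm_scale -/D /shr_t -/D.
case: ifP => hD.
  by rewrite subr0 normr1 mul1r.
have hD' : 2 * r < D by rewrite ltNge hD.
have Dp : 0 < D by lra.
have -> : 1 - (D - 2 * r) / D = 2 * r / D by field; lra.
rewrite ger0_norm; last by rewrite divr_ge0 //; lra.
by rewrite divfK //; lra.
Qed.

Lemma shr_in (p c : 'I_d -> R) (r R' : R) : 0 < r -> r <= R' ->
  euclid_norm (fun i => c i - p i) <= R' + r ->
  forall y, euclid_norm (fun i => y i - shr p c r i) <= r ->
            euclid_norm (fun i => y i - c i) <= R'.
Proof.
move=> hr hR hc y hy.
apply: le_trans (nrm_tri y (shr p c r) c) _.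
set D := euclid_norm (fun i => c i - p i).
rewrite (@nrm_ext _ _ (fun i => shr p c r i - c i) (fun i => shr_t p c r * (p i - c i))); last first.
  by move=> i; rewrite /shr /=; ring.
rewrite nrm_scale (nrm_sym p c) -/D /shr_t -/D.
case: ifP => hD.
  by rewrite normr0 mul0r; lra.
have hD' : 2 * r < D by rewrite ltNge hD.
have Dp : 0 < D by lra.
have hc' : D <= R' + r by [].
rewrite ger0_norm; last by rewrite divr_ge0 //; lra.
by rewrite divfK //; lra.
Qed.

End Shrink.

Lemma pt_bound (R : realType) (x e A : R) : `|e| <= 1 -> x ^+ 2 <= A ^+ 2 -> 0 <= A ->
  (x + e) ^+ 2 <= x ^+ 2 + (2 * A + 1).
Proof.
move=> he hx hA.
have he1 : -1 <= e <= 1 by rewrite -ler_norml.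
case/andP: he1 => he1 he2.
have hx1 : x <= A by nra.
have hx2 : - A <= x by nra.
nra.
Qed.

Lemma sum_bound (R : realType) d (x e : 'I_d -> R) (A : R) :
  (forall j, `|e j| <= 1) -> (forall j, x j ^+ 2 <= A ^+ 2) -> 0 <= A ->
  sqv (fun j => x j + e j) <= sqv x + (d%:R) * (2 * A + 1).
Proof.
move=> he hx hA.
rewrite /sqv.
have -> : d%:R * (2 * A + 1) = \sum_(j < d) (2 * A + 1).
  by rewrite sumr_const card_ord mulr_natl.
rewrite -big_split /=; apply: ler_sum => j _; exact: pt_bound.
Qed.

Lemma le_ffun_inord (L : nat) : True. Proof. by []. Qed.

Section Lattice.
Variable R : realType.
Variables d L C : nat.

Definition Box := {ffun 'I_d -> 'I_L.+1}.

Definition crd (n : Box) : 'I_d -> R := fun j => (n j)%:R - C%:R.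

Definition Iset (rho : nat) : {set Box} := [set n : Box | sqv (crd n) <= rho%:R ^+ 2].

Definition Ic rho := #|Iset rho|.

Lemma crd_bound (n : Box) (rho : nat) : n \in Iset rho ->
  forall j, (C <= n j + rho)%N /\ (n j <= C + rho)%N.
Proof.
rewrite inE => h j.
have h1 : crd n j ^+ 2 <= rho%:R ^+ 2 := le_trans (sq_le_sqv _ j) h.
have h2 : `|crd n j| <= rho%:R.
  by rewrite -ler_sqr ?nnegrE ?ler0n // real_normK ?num_real.
move: h2; rewrite ler_norml /crd => /andP [h3 h4].
split; rewrite -(ler_nat R) natrD; lra.
Qed.

Lemma Ic_upper rho : (Ic rho <= (2 * rho + 1) ^ d)%N.
Proof.
pose h (n : Box) : {ffun 'I_d -> 'I_(2 * rho)%N.+1} := [ffun j => inord (n j + rho - C)].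
have hinj : {in Iset rho &, injective h}.
  move=> n n' hn hn' /ffunP hh; apply/ffunP => j; apply/val_inj => /=.
  have := hh j; rewrite !ffunE => /(congr1 (@nat_of_ord _)).
  have [a1 a2] := crd_bound hn j; have [b1 b2] := crd_bound hn' j.
  rewrite !inordK; lia.
rewrite /Ic -(card_in_imset hinj).
apply: leq_trans (max_card _) _.
by rewrite card_ffun !card_ord addn1.
Qed.

Lemma natrBD (u v w : nat) : (w <= u + v)%N -> ((u + v - w)%N)%:R = u%:R + v%:R - w%:R :> R.
Proof. by move=> h; rewrite natrB // natrD. Qed.

Lemma sqv_le_const (x : 'I_d -> R) (A : R) : (forall j, x j ^+ 2 <= A) -> sqv x <= d%:R * A.
Proof.
move=> h; rewrite /sqv.
have -> : d%:R * A = \sum_(j < d) A by rewrite sumr_const card_ord mulr_natl.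
by apply: ler_sum => j _; exact: h.
Qed.

Lemma Ic_lower (a rho : nat) : (a <= C)%N -> (C + a <= L)%N -> (d * a ^ 2 <= rho ^ 2)%N ->
  ((2 * a + 1) ^ d <= Ic rho)%N.
Proof.
move=> h1 h2 h3.
pose g (f : {ffun 'I_d -> 'I_(2 * a)%N.+1}) : Box := [ffun j => inord (f j + C - a)].
have hinj : injective g.
  move=> f f' /ffunP hh; apply/ffunP => j; apply/val_inj => /=.
  have := hh j; rewrite !ffunE => /(congr1 (@nat_of_ord _)).
  have hf := ltn_ord (f j); have hf' := ltn_ord (f' j).
  rewrite !inordK; lia.
have -> : ((2 * a + 1) ^ d = #|[set g f | f in [set: {ffun 'I_d -> 'I_(2 * a)%N.+1}]]|)%N.
  by rewrite card_imset // cardsT card_ffun !card_ord addn1.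
apply: subset_leq_card; apply/subsetP => _ /imsetP [f _ ->].
rewrite inE.
apply: le_trans (sqv_le_const (A := a%:R ^+ 2) _) _.
  move=> j; rewrite /crd /g ffunE.
  have key : forall u : nat, (u < (2 * a)%N.+1)%N ->
    (u + C - a < L.+1)%N /\ (((u + C - a)%N)%:R - C%:R) ^+ 2 <= a%:R ^+ 2 :> R.
    move=> u hu; split; first by lia.
    rewrite natrBD; last by lia.
    have hf1 : u%:R <= (2 * a)%:R :> R by rewrite ler_nat; lia.
    rewrite natrM in hf1.
    have hf0 : 0 <= u%:R :> R by [].
    nra.
  have [k1 k2] := key _ (ltn_ord (f j)).
  by rewrite inordK.
rewrite -natrX -natrM -natrX ler_nat; lia.
Qed.

Lemma cell_key (u : nat) : (C <= L)%N -> (u <= L)%N ->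
  let z := ((u + 1 + 2 * C) %/ 3)%N in let r := ((u + 1 + 2 * C) %% 3)%N in
  (z <= L)%N /\ (r < 3)%N /\
  3 * (z%:R - C%:R) = (u%:R - C%:R) + (1 - r%:R) :> R.
Proof.
move=> hC hu z r.
have e := divn_eq (u + 1 + 2 * C)%N 3.
split; first by rewrite /z; lia.
split; first by rewrite /r ltn_mod.
have e' : ((u + 1 + 2 * C)%N)%:R = ((z * 3 + r)%N)%:R :> R by rewrite -e.
move: e'; rewrite !natrD !natrM /=.
lra.
Qed.

Lemma Ic_cell (M : nat) : (C <= L)%N -> (Ic (3 * M) <= 3 ^ d * Ic (M + d))%N.
Proof.
move=> hC.
pose cm (n : Box) : Box * {ffun 'I_d -> 'I_3} :=
  ([ffun j => inord ((n j + 1 + 2 * C) %/ 3)%N], [ffun j => inord ((n j + 1 + 2 * C) %% 3)%N]).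
have hinj : injective cm.
  move=> n n' [] /ffunP h1 /ffunP h2; apply/ffunP => j; apply/val_inj => /=.
  have := h1 j; have := h2 j; rewrite !ffunE.
  move=> /(congr1 (@nat_of_ord _)) e2 /(congr1 (@nat_of_ord _)) e1.
  have [a1 [a2 _]] := cell_key hC (ltnSE (ltn_ord (n j))).
  have [b1 [b2 _]] := cell_key hC (ltnSE (ltn_ord (n' j))).
  move: e1 e2; rewrite !inordK //.
  move=> e1 e2.
  have := divn_eq (n j + 1 + 2 * C)%N 3; have := divn_eq (n' j + 1 + 2 * C)%N 3.
  rewrite e1 e2; lia.
rewrite /Ic -(card_imset (Iset (3 * M)) hinj).
apply: (@leq_trans #|setX (Iset (M + d)) [set: {ffun 'I_d -> 'I_3}]|).
  apply: subset_leq_card; apply/subsetP => _ /imsetP [n hn ->].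
  rewrite inE in_setT andbT inE.
  have hn' : sqv (crd n) <= ((3 * M)%N)%:R ^+ 2 by move: hn; rewrite inE.
  set z := [ffun j => inord ((n j + 1 + 2 * C) %/ 3)%N] : Box.
  pose e j : R := 1 - ((n j + 1 + 2 * C) %% 3)%N%:R.
  have hz : forall j, 3 * crd z j = crd n j + e j.
    move=> j; have [_ [_ k]] := cell_key hC (ltnSE (ltn_ord (n j))).
    rewrite /crd /z ffunE inordK; first exact: k.
    by have [k1 _] := cell_key hC (ltnSE (ltn_ord (n j))).
  have he : forall j, `|e j| <= 1.
    move=> j; have [_ [k _]] := cell_key hC (ltnSE (ltn_ord (n j))).
    rewrite /e ler_norml.
    have : ((n j + 1 + 2 * C) %% 3)%N%:R <= 2 :> R by rewrite (ler_nat R _ 2); lia.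
    have : 0 <= ((n j + 1 + 2 * C) %% 3)%N%:R :> R by [].
    lra.
  have h9 : sqv (fun j => 3 * crd z j) <= sqv (crd n) + d%:R * (2 * ((3 * M)%N)%:R + 1).
    rewrite (@sqv_ext _ _ _ (fun j => crd n j + e j)) //.
    apply: sum_bound => //.
    by move=> j; apply: le_trans (sq_le_sqv _ j) hn'.
  rewrite sqv_scale in h9.
  have hd : d%:R <= d%:R ^+ 2 :> R by rewrite -natrX ler_nat; nia.
  have hM : 0 <= M%:R :> R by [].
  have hd0 : 0 <= d%:R :> R by [].
  move: h9 hn'; rewrite !natrM !natrD /=; nra.
by rewrite cardsX cardsT card_ffun !card_ord mulnC.
Qed.

Definition Pt (M : nat) (n : Box) : 'I_d -> R := fun j => crd n j / M%:R.

Definition Sq (M : nat) (q : 'I_d -> R) : {set Box} :=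
  [set n : Box | sqv (fun j => Pt M n j - q j) <= 1].

Lemma Sq_lower (M : nat) (q : 'I_d -> R) : (0 < M)%N -> (d <= M)%N -> (3 * M <= C)%N ->
  (C + 3 * M <= L)%N -> sqv q <= 4 -> (Ic (M - d) <= #|Sq M q|)%N.
Proof.
move=> hM0 hdM hC1 hC2 hq.
have hMr : 0 < M%:R :> R by rewrite ltr0n.
pose G j : nat := Num.trunc (M%:R * q j + (2 * M)%N%:R).
have hG : forall j, 0 <= M%:R * q j + (2 * M)%N%:R /\ (G j)%:R <= M%:R * q j + (2 * M)%N%:R
     /\ M%:R * q j + (2 * M)%N%:R < (G j)%:R + 1 /\ (G j <= 4 * M)%N.
  move=> j.
  have hqj : q j ^+ 2 <= 4 := le_trans (sq_le_sqv _ j) hq.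
  have hq1 : -2 <= q j <= 2 by rewrite -ler_norml; rewrite -(ler_sqr) ?nnegrE ?normr_ge0 //; rewrite real_normK ?num_real //; lra.
  case/andP: hq1 => hq1 hq2.
  have h0 : 0 <= M%:R * q j + (2 * M)%N%:R by rewrite natrM; nra.
  split => //; split; first by rewrite /G truncn_le.
  split.
    have := leqnn (G j); rewrite {2}/G truncn_le_nat -natr1; lra.
  rewrite -(ler_nat R) natrM.
  have : (G j)%:R <= M%:R * q j + (2 * M)%N%:R by rewrite /G truncn_le.
  rewrite natrM; nra.
pose f (m : Box) : Box := [ffun j => inord (m j + G j - 2 * M)%N].
have hval : forall m, m \in Iset (M - d)%N -> forall j,
    (2 * M <= m j + G j)%N /\ (m j + G j - 2 * M <= L)%N.
  move=> m hm j; have [a1 a2] := crd_bound hm j; have [_ [_ [_ g4]]] := hG j.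
  have ar : forall u g : nat, (C <= u + (M - d))%N -> (u <= C + (M - d))%N -> (g <= 4 * M)%N ->
    (2 * M <= u + g)%N /\ (u + g - 2 * M <= L)%N by move=> *; lia.
  exact: ar.
have hinj : {in Iset (M - d)%N &, injective f}.
  move=> m m' hm hm' /ffunP hh; apply/ffunP => j; apply/val_inj => /=.
  have := hh j; rewrite !ffunE => /(congr1 (@nat_of_ord _)).
  have [a1 a2] := hval _ hm j; have [b1 b2] := hval _ hm' j.
  have ar : forall u u' g : nat, (2 * M <= u + g)%N -> (2 * M <= u' + g)%N ->
    (u + g - 2 * M)%N = (u' + g - 2 * M)%N -> u = u' by move=> *; lia.
  rewrite !inordK ?ltnS //.
  exact: ar.
rewrite /Ic -(card_in_imset hinj).
apply: subset_leq_card; apply/subsetP => _ /imsetP [m hm ->].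
rewrite inE.
pose e j : R := (G j)%:R - (M%:R * q j + (2 * M)%N%:R).
have hco : forall j, Pt M (f m) j - q j = M%:R^-1 * (crd m j + e j).
  move=> j; have [a1 a2] := hval _ hm j.
  rewrite /Pt /crd /f ffunE inordK ?ltnS //.
  rewrite natrB // natrD /e; field; lra.
rewrite (@sqv_ext _ _ _ (fun j => M%:R^-1 * (crd m j + e j))) // sqv_scale.
have hb : sqv (fun j => crd m j + e j) <= sqv (crd m) + d%:R * (2 * ((M - d)%N)%:R + 1).
  apply: sum_bound => //.
  - move=> j; have [_ [g2 [g3 _]]] := hG j; rewrite /e ler_norml; lra.
  - by move=> j; apply: le_trans (sq_le_sqv _ j) _; move: hm; rewrite inE.
have hm' : sqv (crd m) <= ((M - d)%N)%:R ^+ 2 by move: hm; rewrite inE.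
move: hb hm'; rewrite natrB //.
have hd1 : d%:R <= d%:R ^+ 2 :> R by rewrite -natrX ler_nat; nia.
have hd0 : 0 <= d%:R :> R by [].
have hdM' : d%:R <= M%:R :> R by rewrite ler_nat.
have hs := sqv_ge0 (fun j => crd m j + e j).
move=> hb hm'.
rewrite exprVn mulrC ler_pdivrMr; last by rewrite exprn_gt0.
rewrite mul1r.
nra.
Qed.

Lemma Sq_sub (M : nat) (q : 'I_d -> R) : (0 < M)%N -> sqv q <= 4 ->
  Sq M q \subset Iset (3 * M).
Proof.
move=> hM hq; apply/subsetP => n; rewrite !inE => hn.
have hMr : 0 < M%:R :> R by rewrite ltr0n.
have h1 := nrm_tri (Pt M n) q (fun _ => 0).
rewrite (@nrm_ext _ _ (fun i => Pt M n i - 0) (Pt M n)) in h1; last by move=> i; rewrite subr0.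
rewrite (@nrm_ext _ _ (fun i => q i - 0) q) in h1; last by move=> i; rewrite subr0.
have h2 : euclid_norm (fun i => Pt M n i - q i) <= 1 by rewrite nrm_le // expr1n.
have h3 : euclid_norm q <= 2 by rewrite nrm_le //; apply: le_trans hq _; nra.
have h4 : euclid_norm (Pt M n) <= 3 by lra.
move: h4; rewrite nrm_le // => h4.
rewrite (@sqv_ext _ _ (crd n) (fun j => M%:R * Pt M n j)); last first.
  by move=> j; rewrite /Pt mulrC divfK // gt_eqF.
rewrite sqv_scale natrM.
have := sqv_ge0 (Pt M n); nra.
Qed.

End Lattice.

Lemma card_as_sum (T : finType) (A B : {set T}) : A \subset B -> #|A| = (\sum_(n in B) (n \in A))%N.
Proof.
move=> sAB; rewrite -sum1_card big_mkcond [RHS]big_mkcond /=.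
apply: eq_bigr => n _.
case hA: (n \in A); case hB: (n \in B) => //.
by move: (subsetP sAB n hA); rewrite hB.
Qed.

Section DC.
Variable R : realType.
Variables d L C : nat.
Variables (I : finType) (W : {set I}) (q : I -> 'I_d -> R) (K M : nat).
Hypothesis hM : (0 < M)%N.
Hypothesis hq : forall i, i \in W -> sqv (q i) <= 4.
Hypothesis hK : forall x : 'I_d -> R, (#|[set i in W | (sqv (fun j => x j - q i j) <= 1)%R]| <= K)%N.

Lemma double_count : (\sum_(i in W) #|Sq L C M (q i)| <= K * Ic R d L C (3 * M))%N.
Proof.
rewrite (eq_bigr (fun i => \sum_(n in Iset R d L C (3 * M)) (n \in Sq L C M (q i)))%N); last first.
  by move=> i hi; apply: card_as_sum; exact: Sq_sub hM (hq hi).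
rewrite exchange_big /=.
apply: (@leq_trans (\sum_(n in Iset R d L C (3 * M)) K)); last by rewrite sum_nat_const mulnC.
apply: leq_sum => n _.
have -> : (\sum_(i in W) (n \in Sq L C M (q i)) = #|[set i in W | n \in Sq L C M (q i)]|)%N.
  rewrite (card_as_sum (B:=W)); last by apply/subsetP => i; rewrite inE => /andP[].
  by apply: eq_bigr => i hi; rewrite inE hi.
apply: leq_trans; last exact: (hK (Pt R C M n)).
apply: subset_leq_card; apply/subsetP => i; rewrite !inE => /andP[-> ].
by [].
Qed.
End DC.


Local Close Scope ring_scope.

Lemma bern (K s : nat) : K ^ s * (K + s) <= K * (K + 1) ^ s.
Proof.
elim: s => [|s IH]; first by rewrite !expn0 mul1n muln1 addn0.
rewrite !expnS.
have h : K ^ s * (K + s) * (K + 1) <= K * (K + 1) ^ s * (K + 1) by rewrite leq_mul2r IH orbT.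
apply: leq_trans _ (leq_trans h _); last by rewrite mulnA [_ * (K+1)]mulnC -!mulnA mulnCA.
set X := K ^ s. nia.
Qed.

Lemma growth (R : realType) (d L C K : nat) : 0 < d -> 0 < K ->
  let a := K * (4 * d) ^ d + 1 in let M0 := d * a + d in
  a <= C -> C + a <= L ->
  exists k, k < a /\ K * Ic R d L C (M0 + 2 * d * k + d) < (K + 1) * Ic R d L C (M0 + 2 * d * k - d).
Proof.
move=> hd hK a M0 hC1 hC2.
pose J k := Ic R d L C (M0 + 2 * d * k - d).
have hJ1 : forall k, Ic R d L C (M0 + 2 * d * k + d) = J k.+1.
  by move=> k; rewrite /J; congr Ic; rewrite /M0; lia.
case: (boolP [exists k : 'I_a, K * J k.+1 < (K + 1) * J k]).
  by case/existsP => k hk; exists k; split => //; rewrite hJ1.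
move=> hn.
have hstep : forall k, k < a -> (K + 1) * J k <= K * J k.+1.
  move=> k hk; move/existsPn: hn => /(_ (Ordinal hk)) /=; by rewrite -leqNgt.
have hind : forall k, k <= a -> (K + 1) ^ k * J 0 <= K ^ k * J k.
  elim=> [|k IH] hk; first by rewrite !expn0.
  rewrite !expnS -mulnA.
  apply: leq_trans (_ : (K + 1) * (K ^ k * J k) <= _).
    by rewrite leq_mul2l IH ?orbT //; lia.
  move: (hstep k hk); set Q := K ^ k; set A := J k; set B := J k.+1 => h.
  nia.
have hA := hind a (leqnn a).
have hB : K ^ a * ((K + a) * J 0) <= K ^ a * (K * J a).
  have := bern K a.
  have := hA.
  set P := (K + 1) ^ a. set Q := K ^ a. nia.
have hKa : 0 < K ^ a by rewrite expn_gt0 hK.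
rewrite leq_pmul2l // in hB.
have hJ0 : (2 * a + 1) ^ d <= J 0.
  rewrite /J; have -> : M0 + 2 * d * 0 - d = d * a by rewrite /M0; lia.
  apply: Ic_lower => //; nia.
have hJa : J a <= (4 * d) ^ d * (2 * a + 1) ^ d.
  rewrite /J -expnMn; apply: leq_trans (Ic_upper _ _ _ _ _) _.
  rewrite leq_exp2r //; rewrite /M0; nia.
have hX : 0 < (2 * a + 1) ^ d by rewrite expn_gt0; lia.
move: hB hJ0 hJa hX; rewrite /a.
set X := (2 * _ + 1) ^ d; set Y := (4 * d) ^ d.
nia.
Qed.

Lemma core (R : realType) (d : nat) (I : finType) (W : {set I}) (q : I -> 'I_d -> R) (K : nat) :
  0 < d -> 0 < K -> (forall i, i \in W -> (sqv (q i) <= 4)%R) ->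
  (forall x : 'I_d -> R, #|[set i in W | (sqv (fun j => x j - q i j) <= 1)%R]| <= K) ->
  #|W| <= K * 3 ^ d.
Proof.
move=> hd hK hq hx.
rewrite leqNgt; apply/negP => hW.
set K' := K * 3 ^ d.
have hK' : 0 < K' by rewrite muln_gt0 hK expn_gt0.
set a := K' * (4 * d) ^ d + 1.
set M0 := d * a + d.
set C := 3 * (M0 + 2 * d * a) + a.
set L := 2 * C.
have [k [hk hg]] := growth R (L := L) (C := C) hd hK' (ltac:(rewrite /C; lia)) (ltac:(rewrite /L /C; lia)).
rewrite -/a -/M0 in hk hg.
set M := M0 + 2 * d * k in hg.
have hM0 : 0 < M by rewrite /M /M0; lia.
have hdc := @double_count R d L C I W q K M hM0 hq hx.
have hcell := Ic_cell R d (L := L) (C := C) M (ltac:(rewrite /L; lia)).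
have hlow : #|W| * Ic R d L C (M - d) <= \sum_(i in W) #|Sq L C M (q i)|.
  rewrite -sum_nat_const; apply: leq_sum => i hi.
  apply: Sq_lower => //; try (rewrite /M /M0 /C /L; nia).
  exact: hq.
move: hg hdc hcell hlow hW.
set A := Ic R d L C (M - d); set B := Ic R d L C (M + d); set T := Ic R d L C (3 * M).
set S := \sum_(i in W) _.
rewrite /K'.
set Z := 3 ^ d.
nia.
Qed.

Lemma exists_min (R : realType) (V : finType) (f : V -> R) : 0 < #|V| ->
  exists v0, forall v, (f v0 <= f v)%R.
Proof.
case/card_gt0P => x0 _.
case: (@arg_minP _ _ _ x0 predT f) => // v0 _ h.
by exists v0 => v; apply: h.
Qed.

Lemma subset_card_ex (T : finType) (S : {set T}) n : n <= #|S| ->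
  exists A : {set T}, A \subset S /\ #|A| = n.
Proof.
elim: n => [|n IH] hn; first by exists set0; rewrite sub0set cards0.
have [A [hA hAc]] := IH (ltnW hn).
have : 0 < #|S :\: A| by rewrite cardsD (setIidPr hA) hAc subn_gt0.
case/card_gt0P => x; rewrite inE => /andP [hxA hxS].
exists (x |: A); split.
  by rewrite subUset sub1set hxS hA.
by rewrite cardsU1 hxA hAc.
Qed.


Local Open Scope ring_scope.

Theorem mainTheorem11 (R : realType) (d : nat) (V : finType) (e : rel V)
  (c : V -> 'I_d -> R) (rad : V -> R) :
  (0 < d)%N ->
  (0 < #|V|)%N ->
  simple_graph e ->
  (forall v, (0 < rad v)%R) ->
  (forall u v, u != v ->
     ~ (forall x, closed_ball (c u) (rad u) x <-> closed_ball (c v) (rad v) x)) ->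
  (forall u v, u != v ->
     (e u v <-> exists x, closed_ball (c u) (rad u) x /\ closed_ball (c v) (rad v) x)) ->
  exists v : V, (degree e v <= (2 * biclique_number e + 1) * 3 ^ d)%N.
Proof.
move=> hd hV [esym eirr] hrad _ hedge.
have [v0 hv0] := exists_min rad hV.
exists v0.
set tau := biclique_number e.
set r := rad v0; set p := c v0.
have hr : 0 < r := hrad v0.
pose W := [set w | e v0 w].
pose q (w : V) : 'I_d -> R := fun j => r^-1 * (shr p (c w) r j - p j).
have hcp : forall w, w \in W -> euclid_norm (fun j => c w j - p j) <= rad w + r.
  move=> w; rewrite inE => hw.
  have hne : v0 != w by apply/eqP => h; move: hw; rewrite h eirr.
  have [z [hz1 hz2]] := (hedge v0 w hne).1 hw.
  apply: le_trans (nrm_tri (c w) z p) _.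
  rewrite (nrm_sym (c w) z).
  rewrite /closed_ball -/p -/r in hz1 hz2; lra.
apply: (@core R d V W q (2 * tau + 1)); [done | lia | |].
  move=> w hw.
  rewrite /q sqv_scale.
  have h := shr_near p (c w) hr.
  rewrite nrm_le in h; last by lra.
  rewrite exprVn mulrC ler_pdivrMr; last by rewrite exprn_gt0.
  by move: h; rewrite expr2 expr2; lra.
move=> x.
rewrite leqNgt; apply/negP => hX.
set X := [set i in W | _] in hX.
pose y : 'I_d -> R := fun j => p j + r * x j.
have hyX : forall i, i \in X -> closed_ball (c i) (rad i) y.
  move=> i; rewrite inE => /andP [hiW hi].
  rewrite /closed_ball.
  apply: (shr_in (p := p) hr (hv0 i) (hcp i hiW)).
  rewrite nrm_le; last by lra.
  rewrite (@sqv_ext _ _ _ (fun j => r * (x j - q i j))); last first.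
    by move=> j; rewrite /y /q; field; lra.
  rewrite sqv_scale.
  have : 0 <= r ^+ 2 by rewrite sqr_ge0.
  move: hi; nra.
have [A [hA hAc]] := @subset_card_ex _ X tau.+1 (ltac:(lia)).
have [B [hB hBc]] := @subset_card_ex _ (X :\: A) tau.+1 (ltac:(rewrite cardsD (setIidPr hA) hAc; lia)).
have hbi : has_biclique e tau.+1.
  apply/existsP; exists A; apply/existsP; exists B.
  apply/and4P; split.
  - rewrite -setI_eq0; apply/eqP/setP => z; rewrite !inE.
    apply/negP => /andP [hzA hzB].
    by move: (subsetP hB z hzB); rewrite !inE hzA.
  - by rewrite hAc.
  - by rewrite hBc.
  - apply/forallP => a; apply/implyP => ha; apply/forallP => b; apply/implyP => hb.
    have hbX' := subsetP hB b hb; move: hbX'; rewrite in_setD => /andP [hbA hbX].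
    have haX := subsetP hA a ha.
    have hab : a != b by apply/eqP => h; move: hbA; rewrite -h ha.
    apply/(hedge a b hab).2.
    by exists y; split; apply: hyX.
have hXV : (#|X| <= #|V|)%N by exact: max_card.
have hlt : (tau.+1 < #|V|.+1)%N by lia.
have := @leq_bigmax_cond _ (fun t : 'I_#|V|.+1 => has_biclique e t) (fun t => val t) (Ordinal hlt) hbi.
rewrite -/(biclique_number e) -/tau /=; lia.
Qed.
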